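(* Consider a stochastic block model graph with parameters $N_0,N_1\ge2$, $r,q\in(0,1)$ and label rate $\beta\in(0,1)$. Let $\sigma_1\ge0$ and $0\le\sigma_2<1$. Then with probability at least $$1-\sum_{j=0}^1N_j\left\{\exp\!\Big(-\frac{qN_{1-j}\sigma_1^2}{2(1+\frac13\sigma_1)}\Big)+3\exp\!\Big(-\frac18\beta rN_j\sigma_2^2\Big)\right\},$$ for every $j\in\{0,1\}$ and every $x_i\in\mathcal X_j$ we have $$\gamma_i\le\frac{(1+\sigma_1)qN_{1-j}}{(1+\sigma_1)qN_{1-j}+(1-\sigma_2)r(N_j-1)}\quad\text{and}\quad \beta_i\ge\frac{1-\sigma_2}{1+\sigma_2}\beta.$$
   Context: Stochastic block model (SBM): the vertex set $\mathcal X=\{x_1,\dots,x_n\}$ is partitioned as $\mathcal X=\mathcal X_0\cup\mathcal X_1$ with $|\mathcal X_0|=N_0$, $|\mathcal X_1|=N_1$, $n=N_0+N_1$ (the true label $g(x)=j$ for $x\in\mathcal X_j$). Edge weights are binary, $w_{xy}=w_{yx}\in\{0,1\}$, no self-loops, and for distinct pairs the edges are independent with $\mathbb P(w_{xy}=1)=r$ if $x,y$ lie in the same block and $\mathbb P(w_{xy}=1)=q$ if they lie in different blocks. Independently, each vertex is labeled (placed in $\Gamma$) with probability $\beta$, independently across vertices. For $x_i\in\mathcal X_j$: $$\gamma_i=\frac{\sum_{x\in\mathcal X_{1-j}}w_{x_ix}}{\sum_{x\in\mathcal X}w_{x_ix}},\qquad \beta_i=\frac{\sum_{x\in\mathcal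 X_j\cap\Gamma}w_{x_ix}}{\sum_{x\in\mathcal X_j}w_{x_ix}}.$$ *)

(* Defs.v *)
From HB Require Import structures.
From mathcomp Require Import all_boot all_order all_algebra.
From mathcomp Require Import all_classical all_reals all_analysis.
Set Implicit Arguments. Unset Strict Implicit. Unset Printing Implicit Defensive.
Import Order.TTheory GRing.Theory Num.Theory.
Local Open Scope ring_scope.

(* Vertices of the SBM: 'I_(N0 + N1).  Vertex x lies in block X_1 iff N0 <= x,
   i.e. X_0 = {0,...,N0-1}, X_1 = {N0,...,N0+N1-1}.  Blocks are indexed by bool
   (false = 0, true = 1). *)
Definition blk (N0 N1 : nat) (x : 'I_(N0 + N1)) : bool := (N0 <= x)%N.

Definition Nb (N0 N1 : nat) (j : bool) : nat := if j then N1 else N0.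

(* Sample space: an edge-coin for every ordered pair (only pairs (x,y) with x<y
   are used; the others are forced to false by the mass) and the labeled set Gamma. *)
Definition Omega (n : nat) : finType :=
  ({ffun 'I_n * 'I_n -> bool} * {set 'I_n})%type.

Definition edge (n : nat) (om : Omega n) (x y : 'I_n) : bool :=
  if (x < y)%N then om.1 (x, y) else if (y < x)%N then om.1 (y, x) else false.

Definition wt (R : ringType) (n : nat) (om : Omega n) (x y : 'I_n) : R :=
  (edge om x y)%:R.

Definition sbm_mass (R : ringType) (N0 N1 : nat) (r q beta : R)
  (om : Omega (N0 + N1)) : R :=
  (\prod_(p : 'I_(N0 + N1) * 'I_(N0 + N1))
     (if (p.1 < p.2)%N then
        let pr := if blk p.1 == blk p.2 then r else q in
        (if om.1 p then pr else 1 - pr)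
      else (if om.1 p then 0 else 1)))
  * \prod_(x : 'I_(N0 + N1)) (if x \in om.2 then beta else 1 - beta).

Definition sbm_prob (R : ringType) (N0 N1 : nat) (r q beta : R)
  (E : pred (Omega (N0 + N1))) : R :=
  \sum_(om | E om) sbm_mass r q beta om.

Definition gammai (R : fieldType) (N0 N1 : nat) (om : Omega (N0 + N1))
  (x : 'I_(N0 + N1)) : R :=
  (\sum_(y | blk y != blk x) wt R om x y) / (\sum_y wt R om x y).

Definition betai (R : fieldType) (N0 N1 : nat) (om : Omega (N0 + N1))
  (x : 'I_(N0 + N1)) : R :=
  (\sum_(y | (blk y == blk x) && (y \in om.2)) wt R om x y)
  / (\sum_(y | blk y == blk x) wt R om x y).

(* Main.v *)
Require Import Defs.
From HB Require Import structures.
From mathcomp Require Import all_boot all_order all_algebra.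
From mathcomp Require Import all_classical all_reals all_analysis.
From mathcomp Require Import ring lra.
Import Order.TTheory GRing.Theory Num.Theory.
Local Open Scope ring_scope.


Lemma fact_ge2 k : (2 * 3 ^ k <= (k.+2)`!)%N.
Proof.
elim: k => [//|k IH].
rewrite factS expnS mulnCA.
apply: leq_mul => //.
Qed.

Section ExpB.
Variable R : realType.

Lemma term_le (t : R) k : 0 <= t ->
  t ^+ k.+2 / (k.+2)`!%:R <= t ^+ 2 / 2 * (t / 3) ^+ k.
Proof.
move=> t0.
have -> : t ^+ 2 / 2 * (t / 3) ^+ k = t ^+ k.+2 / (2 * 3 ^ k)%N%:R.
  rewrite expr_div_n natrM natrX (_ : t ^+ k.+2 = t ^+ 2 * t ^+ k); last by rewrite -exprD add2n.
  field.
  by rewrite expf_neq0 // pnatr_eq0.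
apply: ler_wpM2l; first exact: exprn_ge0.
rewrite lef_pV2 ?posrE ?ltr0n ?fact_gt0 ?muln_gt0 ?expn_gt0 //.
by rewrite ler_nat fact_ge2.
Qed.

Lemma psum_le (t : R) n : 0 <= t ->
  \sum_(0 <= i < n.+2) t ^+ i / i`!%:R <=
  1 + t + t ^+ 2 / 2 * \sum_(0 <= k < n) (t / 3) ^+ k.
Proof.
move=> t0; elim: n => [|n IH].
  by rewrite big_nat_recr // big_nat_recr // big_nil /= big_nil !expr0 expr1 !divr1; lra.
rewrite big_nat_recr //= [X in _ <= _ + _ * X]big_nat_recr //= mulrDr addrA.
by apply: lerD => //; apply: term_le.
Qed.

Lemma geom_le (u : R) n : 0 <= u < 1 -> \sum_(0 <= k < n) u ^+ k <= (1 - u)^-1.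
Proof.
move=> /andP[u0 u1].
have e : \sum_(0 <= k < n) u ^+ k = (1 - u ^+ n) / (1 - u).
  elim: n => [|n IH]; first by rewrite big_nil expr0 subrr mul0r.
  rewrite big_nat_recr //= IH exprS.
  field. by rewrite subr_eq0 eq_sym lt_eqF.
rewrite e ler_pdivrMr ?subr_gt0 // mulVf ?subr_eq0 ?(eq_sym 1) ?lt_eqF //.
by rewrite lerBlDr lerDl exprn_ge0.
Qed.

Lemma expR_le_pade (t : R) : 0 <= t -> t < 3 ->
  expR t <= (6 + 4 * t + t ^+ 2) / (6 - 2 * t).
Proof.
move=> t0 t3.
have B : forall n, \sum_(0 <= i < n) t ^+ i / i`!%:R <= (6 + 4 * t + t ^+ 2) / (6 - 2 * t).
  move=> n.
  apply: (@le_trans _ _ (\sum_(0 <= i < n.+2) t ^+ i / i`!%:R)).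
    rewrite [X in _ <= X]big_nat_recr //= [X in _ <= X + _]big_nat_recr //= -addrA lerDl.
    by rewrite addr_ge0 // divr_ge0 // exprn_ge0.
  apply: (le_trans (@psum_le t n t0)).
  have u : 0 <= t / 3 < 1 by apply/andP; split; lra.
  have G := @geom_le (t / 3) n u.
  apply: (@le_trans _ _ (1 + t + t ^+ 2 / 2 * (1 - t / 3)^-1)).
    by rewrite lerD2l ler_wpM2l // divr_ge0 // exprn_ge0.
  rewrite le_eqVlt; apply/orP; left; apply/eqP.
  field. apply/andP; split; lra.
rewrite /expR; apply: limr_le; first exact: is_cvg_series_exp_coeff.
by apply: nearW => n; rewrite /series /= /exp_coeff /=; apply: B.
Qed.
End ExpB.

Section Prob.
Variable R : realType.
Variables N0 N1 : nat.
Variables r q beta : R.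
Local Notation V := 'I_(N0 + N1).
Local Notation Om := (Omega (N0 + N1)).

Definition Hf (x : V) (psi : V -> bool -> R) (p : V * V) (b : bool) : R :=
  if (p.1 < p.2)%N then
    (if p.1 == x then psi p.2 b else if p.2 == x then psi p.1 b else 1)
  else 1.

Lemma comb (om : Om) (x : V) (psi : V -> bool -> R) :
  \prod_(y | y != x) psi y (edge om x y) = \prod_p Hf x psi p (om.1 p).
Proof.
transitivity (\prod_i \prod_j Hf x psi (i, j) (om.1 (i, j))); last first.
  by rewrite pair_bigA; apply: eq_bigr => -[i j].
rewrite [in RHS](bigD1 x) //=.
have E1 : \prod_j Hf x psi (x, j) (om.1 (x, j)) =
    \prod_(j | j != x) (if (x < j)%N then psi j (om.1 (x, j)) else 1).
  rewrite (bigD1 x) //= /Hf /= ltnn mul1r; apply: eq_bigr => j _ /=.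
  by rewrite eqxx.
have E2 : forall i, i != x -> \prod_j Hf x psi (i, j) (om.1 (i, j)) =
    (if (i < x)%N then psi i (om.1 (i, x)) else 1).
  move=> i ix; rewrite (bigD1 x) //= big1 ?mulr1.
    by rewrite /Hf /= (negbTE ix) eqxx.
  by move=> j jx; rewrite /Hf /= (negbTE ix) (negbTE jx); case: ifP.
rewrite E1 (eq_bigr _ E2) -big_split /=; apply: eq_bigr => y yx.
rewrite /edge; case: (ltngtP (nat_of_ord x) (nat_of_ord y)) => h.
- by rewrite mulr1.
- by rewrite mul1r.
- by move: yx; rewrite (val_inj h) eqxx.
Qed.

Definition pr (x y : V) : R := if blk x == blk y then r else q.
Definition pe (x y : V) (e : bool) : R := if e then pr x y else 1 - pr x y.
Definition ps (s : bool) : R := if s then beta else 1 - beta.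

Lemma sum_sets (F : {set V} -> R) :
  \sum_(S : {set V}) F S = \sum_(g : {ffun V -> bool}) F [set y | g y].
Proof.
apply: (reindex (fun g : {ffun V -> bool} => [set y | g y])).
apply: onW_bij; exists (fun S : {set V} => [ffun y => y \in S]).
  by move=> g; apply/ffunP => y; rewrite ffunE inE.
by move=> S; apply/setP => y; rewrite inE ffunE.
Qed.

Lemma key (x : V) (phi : V -> bool -> bool -> R) :
  \sum_(om : Om) sbm_mass r q beta om *
     \prod_(y | y != x) phi y (edge om x y) (y \in om.2)
  = \prod_(y | y != x) \sum_(e : bool) \sum_(s : bool) pe x y e * ps s * phi y e s.
Proof.
rewrite (_ : \sum_(om : Om) _ = \sum_(f : {ffun V * V -> bool}) \sum_(S : {set V})
   sbm_mass r q beta (f, S) * \prod_(y | y != x) phi y (edge (f, S) x y) (y \in S)); last first.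
  by rewrite pair_bigA; apply: eq_bigr => -[f S].
rewrite exchange_big /=.
pose L y s := \sum_(e : bool) pe x y e * phi y e s.
have step : forall S : {set V},
    \sum_(f : {ffun V * V -> bool}) sbm_mass r q beta (f, S) *
       \prod_(y | y != x) phi y (edge (f, S) x y) (y \in S)
    = \prod_(y : V) ps (y \in S) * \prod_(y | y != x) L y (y \in S).
  move=> S.
  rewrite (eq_bigr (fun f : {ffun V * V -> bool} => (\prod_(y : V) ps (y \in S)) *
     \prod_(p : V * V) ((if (p.1 < p.2)%N then
         let pr := if blk p.1 == blk p.2 then r else q in
         (if f p then pr else 1 - pr) else (if f p then 0 else 1))
         * Hf x (fun y e => phi y e (y \in S)) p (f p)))); last first.
    move=> f _; rewrite (comb (f, S) x (fun y e => phi y e (y \in S))) /sbm_mass /=.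
    by rewrite big_split /= /ps; ring.
  rewrite -big_distrr /=; congr (_ * _).
  rewrite -(bigA_distr_bigA (fun (p : V * V) (b : bool) => (if (p.1 < p.2)%N then
         let pr := if blk p.1 == blk p.2 then r else q in
         (if b then pr else 1 - pr) else (if b then 0 else 1))
         * Hf x (fun y e => phi y e (y \in S)) p b)) /=.
  rewrite (comb ([ffun=> false], S) x (fun y _ => L y (y \in S))).
  apply: eq_bigr => p _; rewrite big_bool /= /Hf.
  case: ifP => hp /=; last by rewrite !mul0r !mul1r add0r.
  move: hp; case: p => a b /= hp.
  have [->|h1] := eqVneq a x.
    by rewrite ?eqxx /L big_bool /pe /pr /=; ring.
  have [->|h2] := eqVneq b x.
    by rewrite /L big_bool /pe /pr /= eq_sym; ring.
  by rewrite ?(negbTE h2) !mulr1; ring.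
under eq_bigr => S _ do rewrite step.
rewrite sum_sets.
transitivity (\sum_(g : {ffun V -> bool}) \prod_(y : V)
     (ps (g y) * (if y != x then L y (g y) else 1))).
  apply: eq_bigr => g _; rewrite big_split /=; congr (_ * _).
    by apply: eq_bigr => y _; rewrite inE.
  rewrite [in RHS](bigD1 x) //= eqxx mul1r; apply: eq_bigr => y -> /=.
  by rewrite inE.
rewrite -(bigA_distr_bigA (fun y s => ps s * (if y != x then L y s else 1))).
rewrite (bigD1 x) //= eqxx big_bool /= /ps !mulr1 addrC subrK mul1r.
apply: eq_bigr => y -> /=.
rewrite /L exchange_big /= !big_bool /=; ring.
Qed.


Hypothesis Hr : 0 < r < 1.
Hypothesis Hq : 0 < q < 1.
Hypothesis Hb : 0 < beta < 1.

Definition Ex (F : Om -> R) := \sum_(om : Om) @sbm_mass R N0 N1 r q beta om * F om.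

Lemma mass_ge0 om : 0 <= @sbm_mass R N0 N1 r q beta om.
Proof.
case/andP: Hr => r0 r1; case/andP: Hq => q0 q1; case/andP: Hb => b0 b1.
rewrite /sbm_mass; apply: mulr_ge0; apply: prodr_ge0 => i _.
  case: ifP => _ /=; last by case: ifP.
  by case: ifP => _; case: ifP => _; lra.
by case: ifP => _; lra.
Qed.

Lemma pr_bnd x y : 0 < pr x y < 1.
Proof. by rewrite /pr; case: ifP. Qed.

Lemma total_mass (x : V) : \sum_(om : Om) @sbm_mass R N0 N1 r q beta om = 1.
Proof.
apply: (etrans _ (etrans (key x (fun _ _ _ => 1)) _)).
  by apply: eq_bigr => om _; rewrite big1 ?mulr1.
apply: big1 => y _; rewrite !big_bool /pe /ps /=; ring.
Qed.

Lemma markov (P : pred Om) (F : Om -> R) :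
  (forall om, 0 <= F om) -> (forall om, P om -> 1 <= F om) ->
  @sbm_prob R N0 N1 r q beta P <= Ex F.
Proof.
move=> F0 F1; rewrite /sbm_prob /Ex big_mkcond /=; apply: ler_sum => om _.
case: ifP => Pom.
  by rewrite -{1}(mulr1 (@sbm_mass R N0 N1 _ _ _ _)) ler_wpM2l ?mass_ge0 ?F1.
by rewrite mulr_ge0 ?mass_ge0.
Qed.

Definition Z (x : V) (c d : V -> bool) (om : Om) : R :=
  \sum_(y | y != x) (c y && edge om x y && (d y || (y \in om.2)))%:R.

Definition mm (x : V) (c d : V -> bool) (y : V) : R :=
  (c y)%:R * pr x y * (if d y then 1 else beta).

Lemma mm_bnd x c d y : 0 <= mm x c d y <= 1.
Proof.
have := pr_bnd x y; case/andP: Hb => b0 b1.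
rewrite /mm; case: (c y); case: (d y) => /= /andP[p0 p1]; apply/andP; split; nra.
Qed.

Lemma mgf (x : V) c d t :
  Ex (fun om => expR (t * Z x c d om)) <=
  expR ((expR t - 1) * \sum_(y | y != x) mm x c d y).
Proof.
rewrite /Ex.
under eq_bigr => om _ do rewrite /Z mulr_sumr expR_sum.
rewrite (key x (fun y e s => expR (t * (c y && e && (d y || s))%:R))).
rewrite mulr_sumr expR_sum; apply: ler_prod => y _.
have E : \sum_(e : bool) \sum_(s : bool) pe x y e * ps s *
    expR (t * (c y && e && (d y || s))%:R) = 1 + mm x c d y * (expR t - 1).
  rewrite !big_bool /pe /ps /mm /=.
  by case: (c y); case: (d y); rewrite /= ?mulr1 ?mulr0 ?expR0; ring.
rewrite E; have := mm_bnd x c d y => /andP[m0 m1].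
have et := expR_gt0 t.
apply/andP; split; first nra.
by rewrite mulrC; apply: expR_ge1Dx.
Qed.

Lemma ge1_expR (u : R) : 0 <= u -> 1 <= expR u.
Proof. by move=> u0; apply: le_trans (expR_ge1Dx u); lra. Qed.

Lemma Ex_scale (a : R) (F : Om -> R) : Ex (fun om => a * F om) = a * Ex F.
Proof. by rewrite /Ex mulr_sumr; apply: eq_bigr => om _; rewrite mulrCA. Qed.

Definition muv x c d := \sum_(y | y != x) mm x c d y.

Lemma upper_tail (x : V) c d (dl : R) : 0 <= dl ->
  @sbm_prob R N0 N1 r q beta (fun om => (1 + dl) * muv x c d <= Z x c d om) <=
  expR (- (muv x c d * dl ^+ 2 / (2 * (1 + dl / 3)))).
Proof.
move=> d0; set mu := muv x c d.
have mu0 : 0 <= mu.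
  by apply: sumr_ge0 => y _; case/andP: (mm_bnd x c d y).
pose t := 3 * dl / (3 + dl).
have t0 : 0 <= t by rewrite /t divr_ge0 //; lra.
have t3 : t < 3 by rewrite /t ltr_pdivrMr; lra.
apply: (le_trans (@markov _ (fun om => expR (t * (Z x c d om - (1 + dl) * mu))) _ _)).
- by move=> om; apply: expR_ge0.
- by move=> om /= h; apply: ge1_expR; apply: mulr_ge0 => //; lra.
have -> : Ex (fun om => expR (t * (Z x c d om - (1 + dl) * mu))) =
    expR (- (t * ((1 + dl) * mu))) * Ex (fun om => expR (t * Z x c d om)).
  by rewrite -Ex_scale /Ex; apply: eq_bigr => om _; rewrite -expRD; congr (_ * expR _); ring.
apply: le_trans; first by apply: ler_wpM2l; [exact: expR_ge0| exact: mgf].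
rewrite -expRD ler_expR.
have P := @expR_le_pade R t t0 t3.
rewrite -/(muv x c d) -/mu.
have Q : ((6 + 4 * t + t ^+ 2) / (6 - 2 * t) - 1) * mu - t * ((1 + dl) * mu) =
    - (mu * dl ^+ 2 / (2 * (1 + dl / 3))).
  by rewrite /t; field; apply/andP; split; apply/negP => /eqP; lra.
rewrite -Q; have := ler_wpM2r mu0 (lerB P (lexx 1)); lra.
Qed.

Lemma lower_tail (x : V) c d (dl : R) : 0 <= dl ->
  @sbm_prob R N0 N1 r q beta (fun om => Z x c d om <= (1 - dl) * muv x c d) <=
  expR (- (muv x c d * dl ^+ 2 / 4)).
Proof.
move=> d0; set mu := muv x c d.
have mu0 : 0 <= mu.
  by apply: sumr_ge0 => y _; case/andP: (mm_bnd x c d y).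
pose t := dl / 2.
have t0 : 0 <= t by rewrite /t; lra.
apply: (le_trans (@markov _ (fun om => expR (t * ((1 - dl) * mu) + - t * Z x c d om)) _ _)).
- by move=> om; apply: expR_ge0.
- move=> om /= h; apply: ge1_expR.
  by rewrite mulNr subr_ge0; apply: ler_wpM2l.
have -> : Ex (fun om => expR (t * ((1 - dl) * mu) + - t * Z x c d om)) =
    expR (t * ((1 - dl) * mu)) * Ex (fun om => expR (- t * Z x c d om)).
  by rewrite -Ex_scale /Ex; apply: eq_bigr => om _; rewrite -expRD.
apply: le_trans; first by apply: ler_wpM2l; [exact: expR_ge0| exact: mgf].
rewrite -expRD ler_expR.
have P : expR (- t) - 1 <= - t + t ^+ 2.
  rewrite expRN.
  have e1 := expR_ge1Dx t.
  have : (expR t)^-1 <= (1 + t)^-1.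
    by rewrite lef_pV2 ?posrE ?expR_gt0 //; lra.
  move=> h; apply: (le_trans (lerB h (lexx 1))).
  rewrite -subr_ge0 (_ : _ - _ = t ^+ 3 / (1 + t)); last by field; lra.
  by rewrite divr_ge0 ?exprn_ge0 //; lra.
rewrite -/(muv x c d) -/mu.
have := ler_wpM2r mu0 P; rewrite /t; lra.
Qed.

End Prob.


Section Count.
Variable R : realType.
Variables N0 N1 : nat.
Local Notation V := 'I_(N0 + N1).

Lemma sum_split (F : nat -> R) : \sum_(y : V) F y =
  \sum_(0 <= i < N0) F i + \sum_(N0 <= i < N0 + N1) F i.
Proof. by rewrite -(big_mkord xpredT) (@big_cat_nat _ _ _ N0) // leq_addr. Qed.

Lemma sum_blk (G : bool -> R) :
  \sum_(y : V) G (blk y) = \sum_(j : bool) (Nb N0 N1 j)%:R * G j.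
Proof.
transitivity (\sum_(y : V) (fun i : nat => G (N0 <= i)%N) y) => //.
rewrite (sum_split (fun i => G (N0 <= i)%N)).
rewrite (@eq_big_nat _ _ _ 0 N0 _ (fun _ => G false)); last first.
  by move=> i /andP[_ h]; rewrite leqNgt h.
rewrite (@eq_big_nat _ _ _ N0 (N0 + N1) _ (fun _ => G true)); last first.
  by move=> i /andP[h _]; rewrite h.
by rewrite !sumr_const_nat subn0 addKn big_bool /Nb /= !mulr_natl addrC.
Qed.

Lemma sum_blkE (G : bool -> R) (F : V -> R) : (forall y, F y = G (blk y)) ->
  \sum_(y : V) F y = \sum_(j : bool) (Nb N0 N1 j)%:R * G j.
Proof. by move=> h; rewrite -sum_blk; apply: eq_bigr => y _; apply: h. Qed.

Lemma sum_neq (F : V -> R) x : \sum_(y | y != x) F y = \sum_y F y - F x.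
Proof. by rewrite [\sum_y F y](bigD1 x) //= addrC addrK. Qed.

Lemma edge_xx (om : Omega (N0 + N1)) (x : V) : edge om x x = false.
Proof. by rewrite /edge ltnn. Qed.

Lemma sum_edge (om : Omega (N0 + N1)) (x : V) (P : pred V) :
  \sum_(y | P y) wt R om x y = \sum_(y | y != x) (P y && edge om x y)%:R.
Proof.
rewrite sum_neq edge_xx andbF subr0 big_mkcond /=; apply: eq_bigr => y _.
by rewrite /wt; case: (P y).
Qed.

End Count.

Section Mu.
Variable R : realType.
Variables N0 N1 : nat.
Variables r q beta : R.
Local Notation V := 'I_(N0 + N1).

Lemma muC (x : V) : muv R N0 N1 r q beta x (fun y => blk y != blk x) (fun _ => true)
  = q * (Nb N0 N1 (~~ blk x))%:R.
Proof.
rewrite /muv sum_neq /mm /pr eqxx /= !mul0r subr0.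
rewrite (@sum_blkE R N0 N1 (fun j => (j != blk x)%:R * (if blk x == j then r else q) * 1)) //.
rewrite big_bool; case: (blk x) => /=; ring.
Qed.

Lemma muW (x : V) : muv R N0 N1 r q beta x (fun y => blk y == blk x) (fun _ => true)
  = r * ((Nb N0 N1 (blk x))%:R - 1).
Proof.
rewrite /muv sum_neq /mm /pr eqxx /=.
rewrite (@sum_blkE R N0 N1 (fun j => (j == blk x)%:R * (if blk x == j then r else q) * 1)) //.
rewrite big_bool; case: (blk x) => /=; ring.
Qed.

Lemma muL (x : V) : muv R N0 N1 r q beta x (fun y => blk y == blk x) (fun _ => false)
  = r * beta * ((Nb N0 N1 (blk x))%:R - 1).
Proof.
rewrite /muv sum_neq /mm /pr eqxx /=.
rewrite (@sum_blkE R N0 N1 (fun j => (j == blk x)%:R * (if blk x == j then r else q) * beta)) //.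
rewrite big_bool; case: (blk x) => /=; ring.
Qed.

End Mu.

Lemma det (R : realType) (C W L c0 w0 w1 l0 : R) :
  0 <= C -> 0 <= L -> L <= W -> C <= c0 -> w0 <= W -> W <= w1 -> l0 <= L ->
  0 < c0 -> 0 <= w0 -> 0 < l0 ->
  C / (C + W) <= c0 / (c0 + w0) /\ l0 / w1 <= L / W.
Proof.
move=> C0 L0 LW Cc wW Ww lL c00 w00 l00; split.
  have [->|h] := eqVneq (C + W) 0.
    by rewrite invr0 mulr0 divr_ge0 //; lra.
  have h' : 0 < C + W by rewrite lt_def h /=; lra.
  rewrite ler_pdivrMr // mulrAC ler_pdivlMr; last lra.
  nra.
have W0 : 0 < W by lra.
rewrite ler_pdivrMr; last lra.
rewrite mulrAC ler_pdivlMr //.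
nra.
Qed.


Lemma prob_ind (R : realType) (N0 N1 : nat) (r q beta : R) (P : pred (Omega (N0 + N1))) :
  @sbm_prob R N0 N1 r q beta P =
  \sum_(om : Omega (N0 + N1)) @sbm_mass R N0 N1 r q beta om * (P om)%:R.
Proof.
rewrite /sbm_prob big_mkcond /=; apply: eq_bigr => om _.
by case: (P om); rewrite ?mulr1 ?mulr0.
Qed.

Theorem mainTheorem10 (R : realType) (N0 N1 : nat) (r q beta s1 s2 : R) :
  (2 <= N0)%N -> (2 <= N1)%N ->
  0 < r < 1 -> 0 < q < 1 -> 0 < beta < 1 ->
  0 <= s1 -> 0 <= s2 < 1 ->
  1 - \sum_(j : bool)
        (Nb N0 N1 j)%:R *
        (expR (- ((q * (Nb N0 N1 (~~ j))%:R * s1 ^+ 2) / (2 * (1 + s1 / 3))))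
         + 3 * expR (- (beta * r * (Nb N0 N1 j)%:R * s2 ^+ 2 / 8)))
  <= sbm_prob r q beta
       (fun om => [forall x : 'I_(N0 + N1),
          (gammai R om x <=
             ((1 + s1) * q * (Nb N0 N1 (~~ blk x))%:R)
             / ((1 + s1) * q * (Nb N0 N1 (~~ blk x))%:R
                + (1 - s2) * r * ((Nb N0 N1 (blk x))%:R - 1)))
          && (betai R om x >= (1 - s2) / (1 + s2) * beta)]).
Proof.
move=> hN0 hN1 Hr Hq Hb hs1 /andP[s20 s21].
have n0 : (0 < N0 + N1)%N by rewrite addn_gt0 (leq_trans _ hN0).
pose x0 : 'I_(N0 + N1) := Ordinal n0.
have NbG : forall j, 2 <= (Nb N0 N1 j)%:R :> R.
  by move=> j; rewrite (ler_nat R 2); case: j.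
set good := (fun om => [forall x, _]).
set S := \sum_(j : bool) _.
pose mass := @sbm_mass R N0 N1 r q beta.
pose cC (x : 'I_(N0 + N1)) := fun y : 'I_(N0 + N1) => blk y != blk x.
pose cS (x : 'I_(N0 + N1)) := fun y : 'I_(N0 + N1) => blk y == blk x.
pose dT := fun _ : 'I_(N0 + N1) => true.
pose dF := fun _ : 'I_(N0 + N1) => false.
pose B1 x om := (1 + s1) * muv R N0 N1 r q beta x (cC x) dT <= Z R N0 N1 x (cC x) dT om.
pose B2 x om := Z R N0 N1 x (cS x) dT om <= (1 - s2) * muv R N0 N1 r q beta x (cS x) dT.
pose B3 x om := (1 + s2) * muv R N0 N1 r q beta x (cS x) dT <= Z R N0 N1 x (cS x) dT om.
pose B4 x om := Z R N0 N1 x (cS x) dF om <= (1 - s2) * muv R N0 N1 r q beta x (cS x) dF.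
have DET : forall x om, ~~ B1 x om -> ~~ B2 x om -> ~~ B3 x om -> ~~ B4 x om ->
    (gammai R om x <=
             ((1 + s1) * q * (Nb N0 N1 (~~ blk x))%:R)
             / ((1 + s1) * q * (Nb N0 N1 (~~ blk x))%:R
                + (1 - s2) * r * ((Nb N0 N1 (blk x))%:R - 1)))
          && (betai R om x >= (1 - s2) / (1 + s2) * beta).
  move=> x om h1 h2 h3 h4.
  rewrite /B1 -ltNge /cC /dT /= muC in h1.
  rewrite /B2 -ltNge /cS /dT /= muW in h2.
  rewrite /B3 -ltNge /cS /dT /= muW in h3.
  rewrite /B4 -ltNge /cS /dF /= muL in h4.
  set C := Z R N0 N1 x (fun y => blk y != blk x) (fun _ => true) om in h1.
  set W := Z R N0 N1 x (fun y => blk y == blk x) (fun _ => true) om in h2 h3.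
  set L := Z R N0 N1 x (fun y => blk y == blk x) (fun _ => false) om in h4.
  have eC : \sum_(y | blk y != blk x) wt R om x y = C.
    by rewrite sum_edge /C /Z; apply: eq_bigr => y _; rewrite andbT.
  have eW : \sum_(y | blk y == blk x) wt R om x y = W.
    by rewrite sum_edge /W /Z; apply: eq_bigr => y _; rewrite andbT.
  have eL : \sum_(y | (blk y == blk x) && (y \in om.2)) wt R om x y = L.
    rewrite sum_edge /L /Z; apply: eq_bigr => y _.
    by case: (blk y == blk x); case: (edge om x y); case: (y \in om.2).
  have eT : \sum_y wt R om x y = C + W.
    by rewrite (bigID (fun y => blk y == blk x)) /= eW eC addrC.
  rewrite /gammai /betai eC eT eW eL.
  set N := (Nb N0 N1 (blk x))%:R.
  set N' := (Nb N0 N1 (~~ blk x))%:R.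
  have hN : 2 <= N := NbG _.
  have hN' : 2 <= N' := NbG _.
  case/andP: Hr => r0 r1; case/andP: Hq => q0 q1; case/andP: Hb => b0 b1.
  have C0 : 0 <= C by apply: sumr_ge0 => y _; apply: ler0n.
  have L0 : 0 <= L by apply: sumr_ge0 => y _; apply: ler0n.
  have LW : L <= W.
    apply: ler_sum => y _; rewrite ler_nat.
    by case: (blk y == blk x); case: (edge om x y); case: (y \in om.2).
  have c00 : 0 < (1 + s1) * q * N'.
    by rewrite mulr_gt0 ?mulr_gt0 //; lra.
  have w00 : 0 <= (1 - s2) * r * (N - 1).
    by rewrite mulr_ge0 ?mulr_ge0 //; lra.
  have l00 : 0 < (1 - s2) * (r * beta * (N - 1)).
    by rewrite mulr_gt0 ?mulr_gt0 //; lra.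
  have Cc : C <= (1 + s1) * q * N' by rewrite -mulrA; exact: ltW h1.
  have wW : (1 - s2) * r * (N - 1) <= W by rewrite -mulrA; exact: ltW h2.
  have [g b] := @det R _ _ _ _ _ _ _ C0 L0 LW Cc wW (ltW h3) (ltW h4) c00 w00 l00.
  apply/andP; split; first exact: g.
  rewrite (_ : (1 - s2) / (1 + s2) * beta = (1 - s2) * (r * beta * (N - 1)) / ((1 + s2) * (r * (N - 1)))) //.
  field; apply/and3P; split; apply/negP => /eqP; lra.
have T := @total_mass R N0 N1 r q beta x0.
have -> : sbm_prob r q beta good =
    1 - \sum_(om | ~~ good om) @sbm_mass R N0 N1 r q beta om.
  by rewrite -T (bigID good) /= addrK.
rewrite lerD2l lerN2.
case/andP: (Hr) => r0 r1; case/andP: (Hq) => q0 q1; case/andP: (Hb) => b0 b1.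
have PB : forall x : 'I_(N0 + N1),
    sbm_prob r q beta (B1 x) + sbm_prob r q beta (B2 x) + sbm_prob r q beta (B3 x)
      + sbm_prob r q beta (B4 x) <=
    expR (- ((q * (Nb N0 N1 (~~ blk x))%:R * s1 ^+ 2) / (2 * (1 + s1 / 3))))
         + 3 * expR (- (beta * r * (Nb N0 N1 (blk x))%:R * s2 ^+ 2 / 8)).
  move=> x.
  set N := (Nb N0 N1 (blk x))%:R.
  have hN : 2 <= N := NbG _.
  have P1 := @upper_tail R N0 N1 r q beta Hr Hq Hb x (cC x) dT s1 hs1.
  have P2 := @lower_tail R N0 N1 r q beta Hr Hq Hb x (cS x) dT s2 s20.
  have P3 := @upper_tail R N0 N1 r q beta Hr Hq Hb x (cS x) dT s2 s20.
  have P4 := @lower_tail R N0 N1 r q beta Hr Hq Hb x (cS x) dF s2 s20.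
  rewrite /cC /cS /dT /dF /= muC muW muL in P1 P2 P3 P4.
  rewrite -/N in P2 P3 P4.
  have s0 : 0 <= s2 ^+ 2 by apply: sqr_ge0.
  have Q2 : expR (- (r * (N - 1) * s2 ^+ 2 / 4)) <= expR (- (beta * r * N * s2 ^+ 2 / 8)).
    rewrite ler_expR lerN2.
    have K : beta * N <= 2 * (N - 1) by nra.
    have rs : 0 <= r * s2 ^+ 2 / 8 by apply: divr_ge0 => //; apply: mulr_ge0 => //; lra.
    have := ler_wpM2r rs K; lra.
  have Q3 : expR (- (r * (N - 1) * s2 ^+ 2 / (2 * (1 + s2 / 3)))) <=
      expR (- (beta * r * N * s2 ^+ 2 / 8)).
    rewrite ler_expR lerN2 ler_pdivlMr; last lra.
    have a : beta * (1 + s2 / 3) <= 4 / 3 by nra.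
    have K : N * (2 * (beta * (1 + s2 / 3))) <= 8 * (N - 1) by nra.
    have rs : 0 <= r * s2 ^+ 2 / 8 by apply: divr_ge0 => //; apply: mulr_ge0 => //; lra.
    have := ler_wpM2r rs K; lra.
  have Q4 : expR (- (r * beta * (N - 1) * s2 ^+ 2 / 4)) <= expR (- (beta * r * N * s2 ^+ 2 / 8)).
    rewrite ler_expR lerN2.
    have K : N <= 2 * (N - 1) by lra.
    have rs : 0 <= r * beta * s2 ^+ 2 / 8.
      by apply: divr_ge0 => //; apply: mulr_ge0 => //; apply: mulr_ge0; lra.
    have := ler_wpM2r rs K; lra.
  have := le_trans P2 Q2; have := le_trans P3 Q3; have := le_trans P4 Q4.
  move: P1; rewrite /B1 /B2 /B3 /B4 /cC /cS /dT /dF /= muC muW muL -/N.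
  lra.
apply: (@le_trans _ _ (\sum_(x : 'I_(N0 + N1)) (sbm_prob r q beta (B1 x) + sbm_prob r q beta (B2 x)
     + sbm_prob r q beta (B3 x) + sbm_prob r q beta (B4 x)))); last first.
  apply: le_trans (ler_sum _ (fun x _ => PB x)) _.
  rewrite (@sum_blkE R N0 N1 (fun j => expR (- ((q * (Nb N0 N1 (~~ j))%:R * s1 ^+ 2) / (2 * (1 + s1 / 3))))
         + 3 * expR (- (beta * r * (Nb N0 N1 j)%:R * s2 ^+ 2 / 8)))) //.
have ->: \sum_(x : 'I_(N0 + N1)) (sbm_prob r q beta (B1 x) + sbm_prob r q beta (B2 x)
     + sbm_prob r q beta (B3 x) + sbm_prob r q beta (B4 x)) =
  \sum_(om : Omega (N0 + N1)) @sbm_mass R N0 N1 r q beta om * \sum_(x : 'I_(N0 + N1))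
     ((B1 x om)%:R + (B2 x om)%:R + (B3 x om)%:R + (B4 x om)%:R).
  under [RHS]eq_bigr => om _ do rewrite mulr_sumr.
  rewrite [RHS]exchange_big /=; apply: eq_bigr => x _.
  rewrite !prob_ind -!big_split /=; apply: eq_bigr => om _; ring.
rewrite [X in X <= _]big_mkcond /=; apply: ler_sum => om _.
have m0 := @mass_ge0 R N0 N1 r q beta Hr Hq Hb om.
have s0 : 0 <= \sum_(x : 'I_(N0 + N1)) ((B1 x om)%:R + (B2 x om)%:R + (B3 x om)%:R + (B4 x om)%:R) :> R.
  by apply: sumr_ge0 => x _; rewrite !addr_ge0 ?ler0n.
case: ifP => h; last by rewrite mulr_ge0.
rewrite -{1}(mulr1 (@sbm_mass R N0 N1 r q beta om)) ler_wpM2l //.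
move: h; rewrite /good => /forallPn [x hx].
rewrite (bigD1 x) //=.
have r0' : 0 <= \sum_(i | i != x) ((B1 i om)%:R + (B2 i om)%:R + (B3 i om)%:R + (B4 i om)%:R) :> R.
  by apply: sumr_ge0 => i _; rewrite !addr_ge0 ?ler0n.
suff H : 1 <= (B1 x om)%:R + (B2 x om)%:R + (B3 x om)%:R + (B4 x om)%:R :> R by lra.
move: (DET x om) hx.
case: (B1 x om); case: (B2 x om); case: (B3 x om); case: (B4 x om) => /= D hx; try lra.
Qed.
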